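(* Let $X$ be an infinite compact metric space and $T:X\to X$ continuous, and let $T_K$ be the induced map on the hyperspace $K(X)$. Then $(K(X),T_K)$ is exactly Devaney chaotic if and only if $(X,T)$ is topologically exact and is an HY-system.
   Context: $K(X)$ is the space of non-empty closed subsets of $X$ with the Hausdorff metric $d_H(A,B)=\max\{\max_{x\in A}\min_{y\in B}d(x,y),\ \max_{y\in B}\min_{x\in A}d(x,y)\}$, and $T_K(C)=TC$. A dynamical system $(Y,S)$ (compact metric $Y$, continuous $S$) is topologically exact if for every non-empty open $U\subset Y$ there is $n\in\mathbb{N}$ with $S^nU=Y$; it is exactly Devaney chaotic if it is topologically exact and its periodic points (points $y$ with $S^ny=y$ for some $n\in\mathbb{N}$) are dense. $(Y,S)$ is transitive if for any non-empty open $U,V$ there is $n\in\mathbb{N}$ with $S^nU\cap V\ne\emptyset$; totally transitive if $(Y,S^n)$ is transitive for all $n\in\mathbb{N}$. $(Y,S)$ has dense small periodic sets if for every non-empty open $U\subset Y$ there exist a non-empty closed $Z\subset U$ and $k\in\mathbb{N}$ with $S^kZ\subset Z$. An HY-system is a totally transitive system with dense small periodic sets. *)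

(* Defs.v *)
From Stdlib Require Import Reals List.
Open Scope R_scope.

Definition is_metric {X : Type} (d : X -> X -> R) : Prop :=
  (forall x y, 0 <= d x y) /\
  (forall x, d x x = 0) /\
  (forall x y, d x y = 0 -> x = y) /\
  (forall x y, d x y = d y x) /\
  (forall x y z, d x z <= d x y + d y z).

(** sequential compactness (equivalent to compactness for metric spaces) *)
Definition compact_metric {X : Type} (d : X -> X -> R) : Prop :=
  forall u : nat -> X, exists (phi : nat -> nat) (l : X),
    (forall n, (phi n < phi (S n))%nat) /\
    (forall eps, 0 < eps -> exists N, forall n, (N <= n)%nat -> d (u (phi n)) l < eps).

Definition infinite_type (X : Type) : Prop :=
  forall l : list X, exists x, ~ In x l.

Definition continuous_map {X : Type} (d : X -> X -> R) (T : X -> X) : Prop :=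
  forall x eps, 0 < eps -> exists delta, 0 < delta /\
    forall y, d x y < delta -> d (T x) (T y) < eps.

(** A space is given by a carrier [Y], a predicate [dom] of admissible points,
    a ball relation [ball y z r] meaning "dist(y,z) < r", a notion of equality
    [eqv] of points, and a self-map [S]. *)
Section Generic.
Variables (Y : Type) (dom : Y -> Prop) (ball : Y -> Y -> R -> Prop)
          (eqv : Y -> Y -> Prop) (S : Y -> Y).

Definition open_in (U : Y -> Prop) : Prop :=
  (forall y, U y -> dom y) /\
  (forall y, U y -> exists eps, 0 < eps /\
     forall z, dom z -> ball y z eps -> U z).

Definition closed_in (Z : Y -> Prop) : Prop :=
  (forall y, Z y -> dom y) /\ open_in (fun y => dom y /\ ~ Z y).

Definition nonempty (U : Y -> Prop) : Prop := exists y, U y.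

Definition topologically_exact : Prop :=
  forall U, open_in U -> nonempty U ->
    exists n, (1 <= n)%nat /\
      forall z, dom z -> exists y, U y /\ eqv (Nat.iter n S y) z.

Definition dense_periodic_points : Prop :=
  forall U, open_in U -> nonempty U ->
    exists y, U y /\ exists n, (1 <= n)%nat /\ eqv (Nat.iter n S y) y.

Definition exactly_Devaney_chaotic : Prop :=
  topologically_exact /\ dense_periodic_points.

Definition transitive_map (S' : Y -> Y) : Prop :=
  forall U V, open_in U -> nonempty U -> open_in V -> nonempty V ->
    exists n, (1 <= n)%nat /\ exists y, U y /\ V (Nat.iter n S' y).

Definition totally_transitive : Prop :=
  forall m, (1 <= m)%nat -> transitive_map (Nat.iter m S).

Definition dense_small_periodic_sets : Prop :=
  forall U, open_in U -> nonempty U ->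
    exists Z, nonempty Z /\ closed_in Z /\ (forall z, Z z -> U z) /\
      exists k, (1 <= k)%nat /\ forall z, Z z -> Z (Nat.iter k S z).

Definition HY_system : Prop :=
  totally_transitive /\ dense_small_periodic_sets.

End Generic.

(** ** The base space X (all points admissible, Leibniz equality) *)
Definition ballX {X : Type} (d : X -> X -> R) (x y : X) (r : R) : Prop := d x y < r.
Definition allX {X : Type} (x : X) : Prop := True.

(** ** The hyperspace K(X) of non-empty closed subsets, with the Hausdorff metric *)
Definition closed_set {X : Type} (d : X -> X -> R) (C : X -> Prop) : Prop :=
  closed_in X allX (ballX d) C.

Definition in_KX {X : Type} (d : X -> X -> R) (C : X -> Prop) : Prop :=
  (exists x, C x) /\ closed_set d C.

(** [hausdorff_le d A B r] unfolds d_H(A,B) <= r, i.e.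
    max_{a in A} min_{b in B} d(a,b) <= r and symmetrically (max/min are
    attained since A, B are compact). *)
Definition hausdorff_le {X : Type} (d : X -> X -> R) (A B : X -> Prop) (r : R) : Prop :=
  (forall a, A a -> exists b, B b /\ d a b <= r) /\
  (forall b, B b -> exists a, A a /\ d a b <= r).

Definition ballK {X : Type} (d : X -> X -> R) (A B : X -> Prop) (r : R) : Prop :=
  exists r', r' < r /\ hausdorff_le d A B r'.

Definition set_eq {X : Type} (A B : X -> Prop) : Prop := forall x, A x <-> B x.

Definition T_K {X : Type} (T : X -> X) (C : X -> Prop) : X -> Prop :=
  fun y => exists x, C x /\ y = T x.

(* Main.v *)
From Pilot Require Import Defs.
From Stdlib Require Import Reals List Lra Lia Classical ClassicalEpsilon.
Import Pilot.Defs.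
Open Scope R_scope.

Lemma gchoice {A B : Type} (P : A -> B -> Prop) :
  (forall a, exists b, P a b) -> exists f : A -> B, forall a, P a (f a).
Proof.
  intros H. exists (fun a => proj1_sig (constructive_indefinite_description _ (H a))).
  intro a. exact (proj2_sig (constructive_indefinite_description _ (H a))).
Qed.

Lemma iter_mul {A} (f : A -> A) n m x : Nat.iter n (Nat.iter m f) x = Nat.iter (n*m) f x.
Proof. induction n; simpl; auto. rewrite IHn, Nat.iter_add. reflexivity. Qed.

Lemma iter_TK {X} (T : X -> X) n (S : X -> Prop) x :
  Nat.iter n (T_K T) S x <-> exists y, S y /\ x = Nat.iter n T y.
Proof.
  revert x. induction n; intro x; simpl.
  - split; [intros H; exists x; auto | intros [y [Hy ->]]; auto].
  - unfold T_K at 1. split.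
    + intros [x' [Hx' ->]]. apply IHn in Hx'. destruct Hx' as [y [Hy ->]]. eauto.
    + intros [y [Hy ->]]. exists (Nat.iter n T y). split; auto. apply IHn. eauto.
Qed.

Section M.
End M.

Lemma d_nonneg {X} (d : X -> X -> R) (Hd : is_metric d) x y : 0 <= d x y.
Proof. destruct Hd as [H _]. auto. Qed.
Lemma d_refl {X} (d : X -> X -> R) (Hd : is_metric d) x : d x x = 0.
Proof. destruct Hd as [_ [H _]]. auto. Qed.
Lemma d_eq {X} (d : X -> X -> R) (Hd : is_metric d) x y : d x y = 0 -> x = y.
Proof. destruct Hd as [_ [_ [H _]]]. auto. Qed.
Lemma d_sym {X} (d : X -> X -> R) (Hd : is_metric d) x y : d x y = d y x.
Proof. destruct Hd as [_ [_ [_ [H _]]]]. auto. Qed.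
Lemma d_tri {X} (d : X -> X -> R) (Hd : is_metric d) x y z : d x z <= d x y + d y z.
Proof. destruct Hd as [_ [_ [_ [_ H]]]]. auto. Qed.

Lemma d_small {X} (d : X -> X -> R) (Hd : is_metric d) x y :
  (forall eps, 0 < eps -> d x y < eps) -> x = y.
Proof.
  intros H. apply (d_eq d Hd). destruct (Rle_lt_or_eq_dec 0 (d x y) (d_nonneg d Hd x y)) as [h|h]; auto.
  specialize (H _ h). lra.
Qed.

Definition conv {X} (d : X -> X -> R) (u : nat -> X) (l : X) : Prop :=
  forall eps, 0 < eps -> exists N, forall n, (N <= n)%nat -> d (u n) l < eps.

Lemma closed_of {X} (d : X -> X -> R) (C : X -> Prop) :
  (forall x, ~ C x -> exists eps, 0 < eps /\ forall z, d x z < eps -> ~ C z) -> closed_set d C.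
Proof.
  intros H. split; [intros; exact I|]. split; [intros; exact I|].
  intros y [_ Hy]. destruct (H y Hy) as [e [He H']]. exists e. split; [exact He|].
  intros z _ Hz. split; [exact I|]. apply H'. exact Hz.
Qed.

Lemma closed_elim {X} (d : X -> X -> R) (C : X -> Prop) : closed_set d C ->
  forall x, ~ C x -> exists eps, 0 < eps /\ forall z, d x z < eps -> ~ C z.
Proof.
  intros [_ [_ H]] x Hx. destruct (H x (conj I Hx)) as [e [He H']].
  exists e. split; auto. intros z Hz. apply (H' z I Hz).
Qed.

Lemma seq_closed {X} (d : X -> X -> R) (Hd : is_metric d) C u x :
  closed_set d C -> conv d u x -> (exists N, forall n, (N <= n)%nat -> C (u n)) -> C x.
Proof.
  intros HC Hu [N HN]. apply NNPP. intros Hx.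
  destruct (closed_elim d C HC x Hx) as [e [He H]].
  destruct (Hu e He) as [N' HN'].
  apply (H (u (max N N'))).
  - rewrite (d_sym d Hd). apply HN'. lia.
  - apply HN. lia.
Qed.

Lemma closed_ext {X} (d : X -> X -> R) (C C' : X -> Prop) :
  (forall x, C x <-> C' x) -> closed_set d C -> closed_set d C'.
Proof.
  intros E HC. apply closed_of. intros x Hx.
  destruct (closed_elim d C HC x) as [e [He H]]. { rewrite E; auto. }
  exists e. split; auto. intros z Hz. rewrite <- E. auto.
Qed.

Lemma closed_empty {X} (d : X -> X -> R) : closed_set d (fun _ => False).
Proof. apply closed_of. intros x _. exists 1. split; [lra|]. auto. Qed.

Lemma closed_single {X} (d : X -> X -> R) (Hd : is_metric d) x0 : closed_set d (fun x => x = x0).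
Proof.
  apply closed_of. intros x Hx. exists (d x x0). split.
  - destruct (Rle_lt_or_eq_dec 0 (d x x0) (d_nonneg d Hd x x0)) as [h|h]; auto.
    exfalso. apply Hx. apply (d_eq d Hd). auto.
  - intros z Hz ->. lra.
Qed.

Lemma closed_cball {X} (d : X -> X -> R) (Hd : is_metric d) a r : closed_set d (fun x => d a x <= r).
Proof.
  apply closed_of. intros x Hx. exists (d a x - r). split; [lra|].
  intros z Hz Hz'. pose proof (d_tri d Hd a z x). rewrite (d_sym d Hd z x) in H. lra.
Qed.

Lemma closed_union {X} (d : X -> X -> R) C1 C2 :
  closed_set d C1 -> closed_set d C2 -> closed_set d (fun x => C1 x \/ C2 x).
Proof.
  intros H1 H2. apply closed_of. intros x Hx.
  destruct (closed_elim d C1 H1 x) as [e1 [He1 G1]]; [tauto|].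
  destruct (closed_elim d C2 H2 x) as [e2 [He2 G2]]; [tauto|].
  exists (Rmin e1 e2). split; [apply Rmin_glb_lt; auto|].
  intros z Hz [Hz'|Hz'].
  - apply (G1 z); auto. pose proof (Rmin_l e1 e2). lra.
  - apply (G2 z); auto. pose proof (Rmin_r e1 e2). lra.
Qed.

Lemma closed_inter {X} (d : X -> X -> R) C1 C2 :
  closed_set d C1 -> closed_set d C2 -> closed_set d (fun x => C1 x /\ C2 x).
Proof.
  intros H1 H2. apply closed_of. intros x Hx.
  destruct (classic (C1 x)) as [h|h].
  - destruct (closed_elim d C2 H2 x) as [e [He G]]; [tauto|].
    exists e. split; auto. intros z Hz [_ Hz']. apply (G z); auto.
  - destruct (closed_elim d C1 H1 x) as [e [He G]]; [tauto|].
    exists e. split; auto. intros z Hz [Hz' _]. apply (G z); auto.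
Qed.

Lemma closed_Inter {X} (d : X -> X -> R) (F : nat -> X -> Prop) :
  (forall j, closed_set d (F j)) -> closed_set d (fun x => forall j, F j x).
Proof.
  intros H. apply closed_of. intros x Hx.
  apply not_all_ex_not in Hx. destruct Hx as [j Hj].
  destruct (closed_elim d (F j) (H j) x Hj) as [e [He G]].
  exists e. split; auto. intros z Hz Hz'. apply (G z); auto.
Qed.

Lemma closed_list {X} (d : X -> X -> R) (F : X -> X -> Prop) (l : list X) :
  (forall a, closed_set d (F a)) -> closed_set d (fun x => exists a, In a l /\ F a x).
Proof.
  intros H. induction l as [|b l IH].
  - apply (closed_ext d (fun _ => False)); [|apply closed_empty].
    intros x; split; [tauto|]. intros [a [[] _]].
  - apply (closed_ext d (fun x => F b x \/ exists a, In a l /\ F a x)).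
    + intros x; split.
      * intros [h|[a [Ha h]]]; [exists b; simpl; auto | exists a; simpl; auto].
      * intros [a [[<-|Ha] h]]; [left; auto | right; eauto].
    + apply closed_union; auto.
Qed.

Lemma conv_cont {X} (d : X -> X -> R) (Hd : is_metric d) f u x :
  continuous_map d f -> conv d u x -> conv d (fun n => f (u n)) (f x).
Proof.
  intros Hf Hu e He. destruct (Hf x e He) as [dl [Hdl H]].
  destruct (Hu dl Hdl) as [N HN]. exists N. intros n Hn.
  rewrite (d_sym d Hd). apply H. rewrite (d_sym d Hd). auto.
Qed.

Lemma cont_iter {X} (d : X -> X -> R) T n :
  continuous_map d T -> continuous_map d (Nat.iter n T).
Proof.
  intros HT. induction n; simpl.
  - intros x e He. exists e. split; auto.
  - intros x e He. destruct (HT (Nat.iter n T x) e He) as [d1 [Hd1 H1]].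
    destruct (IHn x d1 Hd1) as [d2 [Hd2 H2]]. exists d2. split; auto.
    intros y Hy. apply H1. apply H2. exact Hy.
Qed.

Lemma closed_preimage {X} (d : X -> X -> R) f C :
  continuous_map d f -> closed_set d C -> closed_set d (fun x => C (f x)).
Proof.
  intros Hf HC. apply closed_of. intros x Hx.
  destruct (closed_elim d C HC (f x) Hx) as [e [He G]].
  destruct (Hf x e He) as [dl [Hdl H]]. exists dl. split; [exact Hdl|].
  intros z Hz. apply G. apply H. auto.
Qed.

Lemma phi_ge (phi : nat -> nat) : (forall n, (phi n < phi (S n))%nat) -> forall n, (n <= phi n)%nat.
Proof. intros H n. induction n; [lia|]. specialize (H n). lia. Qed.

Lemma closed_image {X} (d : X -> X -> R) (Hd : is_metric d) (Hc : compact_metric d) f C :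
  continuous_map d f -> closed_set d C -> closed_set d (fun y => exists x, C x /\ y = f x).
Proof.
  intros Hf HC. apply closed_of. intros y Hy. apply NNPP. intros Hn.
  assert (H : forall n : nat, exists x, C x /\ d y (f x) < / (INR n + 1)).
  { intros n. apply NNPP. intros Hn'. apply Hn. exists (/ (INR n + 1)). split.
    - apply Rinv_0_lt_compat. pose proof (pos_INR n). lra.
    - intros z Hz [x [Hx ->]]. apply Hn'. eauto. }
  apply gchoice in H. destruct H as [u Hu].
  destruct (Hc u) as [phi [l [Hphi Hl]]].
  assert (Cl : C l). { apply (seq_closed d Hd C (fun n => u (phi n)) l HC Hl). exists O. intros; apply Hu. }
  apply Hy. exists l. split; auto. apply (d_small d Hd). intros e He.
  pose proof (conv_cont d Hd f _ _ Hf Hl) as Hfl.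
  destruct (Hfl (e/2)) as [N1 H1]; [lra|].
  destruct (archimed_cor1 (e/2)) as [N2 [H2 H2']]; [lra|].
  set (n := max N1 N2).
  specialize (H1 n ltac:(lia)). simpl in H1.
  destruct (Hu (phi n)) as [_ Hun].
  assert (/ (INR (phi n) + 1) < e/2).
  { apply Rle_lt_trans with (/ INR N2); auto. apply Rinv_le_contravar.
    apply lt_0_INR; auto. pose proof (phi_ge phi Hphi n).
    assert (INR N2 <= INR (phi n)) by (apply le_INR; lia). lra. }
  pose proof (d_tri d Hd y (f (u (phi n))) (f l)). lra.
Qed.

Lemma nested_limit {X} (d : X -> X -> R) (Hd : is_metric d) (Hc : compact_metric d)
  (F : nat -> X -> Prop) (x : nat -> X) :
  (forall j, closed_set d (F j)) -> (forall j j' y, (j <= j')%nat -> F j' y -> F j y) ->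
  (forall j, F j (x j)) ->
  exists phi l, (forall n, (phi n < phi (S n))%nat) /\ conv d (fun n => x (phi n)) l /\ forall j, F j l.
Proof.
  intros HF Hm Hx. destruct (Hc x) as [phi [l [Hphi Hl]]].
  exists phi, l. split; [exact Hphi|]. split; [exact Hl|].
  intros j. apply (seq_closed d Hd (F j) _ l (HF j) Hl). exists j. intros n Hn.
  apply (Hm j (phi n)); [|apply Hx]. pose proof (phi_ge phi Hphi n). lia.
Qed.

Definition img {X} (T : X -> X) n (W : X -> Prop) : X -> Prop :=
  fun x => exists y, W y /\ x = Nat.iter n T y.

Lemma periodic_core {X} (d : X -> X -> R) (Hd : is_metric d) (Hc : compact_metric d) T
  (HT : continuous_map d T) (Z : X -> Prop) k :
  closed_set d Z -> (exists z, Z z) -> (forall z, Z z -> Z (Nat.iter k T z)) ->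
  exists W, (exists w, W w) /\ closed_set d W /\ (forall w, W w -> Z w) /\
    (forall x, img T k W x <-> W x).
Proof.
  intros HZ [z0 Hz0] Hinv.
  set (Zj := fun j x => exists z, Z z /\ x = Nat.iter (j*k) T z).
  assert (Zc : forall j, closed_set d (Zj j)).
  { intro j. apply (closed_image d Hd Hc); auto. apply cont_iter; auto. }
  assert (Zstep : forall j x, Zj (S j) x -> Zj j x).
  { intros j x [z [Hz ->]]. exists (Nat.iter k T z). split; auto.
    replace (S j * k)%nat with (j*k + k)%nat by lia. rewrite Nat.iter_add. reflexivity. }
  assert (Zmono : forall j j' y, (j <= j')%nat -> Zj j' y -> Zj j y).
  { intros j j' y H. induction H; auto. }
  assert (Zapp : forall j x, Zj j x -> Zj (S j) (Nat.iter k T x)).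
  { intros j x [z [Hz ->]]. exists z. split; auto.
    replace (S j * k)%nat with (k + j*k)%nat by lia. rewrite Nat.iter_add. reflexivity. }
  exists (fun x => forall j, Zj j x). split; [|split; [|split]].
  - assert (H : forall j, exists x, Zj j x) by (intro j; exists (Nat.iter (j*k) T z0); exists z0; auto).
    apply gchoice in H. destruct H as [u Hu].
    destruct (nested_limit d Hd Hc Zj u Zc Zmono Hu) as [phi [l [_ [_ Hl]]]]. eauto.
  - apply closed_Inter. exact Zc.
  - intros w Hw. destruct (Hw O) as [z [Hz ->]]. exact Hz.
  - intros x. split.
    + intros [y [Hy ->]] j. apply Zstep. apply Zapp. apply Hy.
    + intros Hw.
      assert (H : forall j, exists y, Zj j y /\ x = Nat.iter k T y).
      { intro j. destruct (Hw (S j)) as [z [Hz ->]]. exists (Nat.iter (j*k) T z). split.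
        - exists z; auto.
        - replace (S j * k)%nat with (k + j*k)%nat by lia. apply Nat.iter_add. }
      apply gchoice in H. destruct H as [u Hu].
      destruct (nested_limit d Hd Hc Zj u Zc Zmono (fun j => proj1 (Hu j))) as [phi [l [_ [Hl Hlj]]]].
      exists l. split; [exact Hlj|].
      apply (d_small d Hd). intros e He.
      destruct (conv_cont d Hd (Nat.iter k T) _ _ (cont_iter d T k HT) Hl e He) as [N HN].
      specialize (HN N (le_n N)). simpl in HN. rewrite <- (proj2 (Hu (phi N))) in HN. exact HN.
Qed.

Fixpoint build {X} (g : list X -> X) (n : nat) : list X :=
  match n with O => nil | S n => g (build g n) :: build g n end.

Lemma finite_net {X} (d : X -> X -> R) (Hd : is_metric d) (Hc : compact_metric d)
  (A : X -> Prop) r : 0 < r ->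
  exists l, (forall a, In a l -> A a) /\ (forall x, A x -> exists a, In a l /\ d x a < r).
Proof.
  intros Hr. apply NNPP. intros Hn.
  assert (H : forall l, (forall a, In a l -> A a) -> exists x, A x /\ forall a, In a l -> r <= d x a).
  { intros l Hl. apply NNPP. intros Hx. apply Hn. exists l. split; auto.
    intros x Ax. apply NNPP. intros Hx'. apply Hx. exists x. split; auto.
    intros a Ha. apply Rnot_lt_le. intros h. apply Hx'. eauto. }
  destruct (H nil) as [x0 _]; [intros a []|].
  assert (H' : forall l, exists x, (forall a, In a l -> A a) -> A x /\ forall a, In a l -> r <= d x a).
  { intros l. destruct (classic (forall a, In a l -> A a)) as [h|h].
    - destruct (H l h) as [x Hx]. exists x. auto.
    - exists x0. tauto. }
  apply gchoice in H'. destruct H' as [g Hg].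
  assert (HA : forall n a, In a (build g n) -> A a).
  { induction n; simpl; [tauto|]. intros a [<-|Ha]; auto. apply (Hg (build g n) IHn). }
  assert (Hin : forall m n, (m < n)%nat -> In (g (build g m)) (build g n)).
  { intros m n. induction n; [lia|]. intros Hmn. simpl.
    destruct (Nat.eq_dec m n) as [->|h]; [left; auto|right; apply IHn; lia]. }
  destruct (Hc (fun n => g (build g n))) as [phi [l [Hphi Hl]]].
  destruct (Hl (r/2)) as [N HN]; [lra|].
  pose proof (HN N (le_n _)) as h1. pose proof (HN (S N) (le_S _ _ (le_n _))) as h2. simpl in h1, h2.
  pose proof (proj2 (Hg (build g (phi (S N))) (HA _)) _ (Hin _ _ (Hphi N))) as h3.
  pose proof (d_tri d Hd (g (build g (phi (S N)))) l (g (build g (phi N)))) as h4.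
  rewrite (d_sym d Hd l) in h4. lra.
Qed.

Lemma exact_surj {X} (d : X -> X -> R) T (x0 : X) :
  topologically_exact X allX (ballX d) eq T -> forall z, exists y, T y = z.
Proof.
  intros H z. destruct (H (fun _ => True)) as [n [Hn Hz]].
  - split; [intros; exact I|]. intros y _. exists 1. split; [lra|]. auto.
  - exists x0; exact I.
  - destruct (Hz z I) as [y [_ Hy]]. destruct n as [|n]; [lia|].
    exists (Nat.iter n T y). rewrite <- Hy. reflexivity.
Qed.

Lemma iter_surj {X} (T : X -> X) : (forall z, exists y, T y = z) -> forall n z, exists y, Nat.iter n T y = z.
Proof.
  intros H n. induction n; intros z; simpl; [eauto|].
  destruct (H z) as [z' <-]. destruct (IHn z') as [y <-]. eauto.
Qed.

Lemma hit_mono {X} (T : X -> X) (V : X -> Prop) n : (forall z, exists y, T y = z) ->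
  (forall z, exists y, V y /\ Nat.iter n T y = z) ->
  forall m, (n <= m)%nat -> forall z, exists y, V y /\ Nat.iter m T y = z.
Proof.
  intros Hs H m Hm z. destruct (iter_surj T Hs (m - n) z) as [z' <-].
  destruct (H z') as [y [Hy <-]]. exists y. split; auto.
  rewrite <- Nat.iter_add. f_equal. lia.
Qed.

Lemma ball_open {X} (d : X -> X -> R) (Hd : is_metric d) a r :
  open_in X allX (ballX d) (fun x => d a x < r).
Proof.
  split; [intros; exact I|]. intros y Hy. exists (r - d a y). split; [lra|].
  intros z _ Hz. unfold ballX in Hz. pose proof (d_tri d Hd a y z). lra.
Qed.

Definition UK {X} (d : X -> X -> R) x0 eps : (X -> Prop) -> Prop :=
  fun C => in_KX d C /\ exists s, s < eps /\ forall c, C c -> d x0 c <= s.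

Lemma UK_open {X} (d : X -> X -> R) (Hd : is_metric d) x0 eps :
  open_in (X -> Prop) (in_KX d) (ballK d) (UK d x0 eps).
Proof.
  split; [intros y [h _]; exact h|]. intros C [HC [s [Hs HCs]]].
  exists (eps - s). split; [lra|]. intros D HD [r' [Hr' [_ H2]]]. split; [exact HD|].
  exists (s + r'). split; [lra|]. intros c Hc. destruct (H2 c Hc) as [a [Ha Hac]].
  pose proof (HCs a Ha). pose proof (d_tri d Hd x0 a c). lra.
Qed.

Lemma UK_ne {X} (d : X -> X -> R) (Hd : is_metric d) x0 eps : 0 < eps ->
  nonempty (X -> Prop) (UK d x0 eps).
Proof.
  intros He. exists (fun x => x = x0). split.
  - split; [exists x0; auto|apply closed_single; auto].
  - exists 0. split; [lra|]. intros c ->. rewrite (d_refl d Hd). lra.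
Qed.

Lemma forward {X} (d : X -> X -> R) (T : X -> X) (Hd : is_metric d) (x0 : X) :
  exactly_Devaney_chaotic (X -> Prop) (in_KX d) (ballK d) set_eq (T_K T) ->
  topologically_exact X allX (ballX d) eq T /\ HY_system X allX (ballX d) T.
Proof.
  intros [Hex Hper].
  assert (TE : topologically_exact X allX (ballX d) eq T).
  { intros U [_ HU] [u Hu]. destruct (HU u Hu) as [eps [He HUe]].
    destruct (Hex (UK d u eps) (UK_open d Hd u eps) (UK_ne d Hd u eps He)) as [n [Hn Hz]].
    exists n. split; [exact Hn|]. intros z _.
    destruct (Hz (fun x => x = z)) as [C [[[[c Hc] _] [s [Hs HC]]] HE]].
    { split; [exists z; auto|apply closed_single; auto]. }
    exists c. split.
    - apply HUe; [exact I|]. unfold ballX. specialize (HC c Hc). lra.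
    - apply (proj1 (HE (Nat.iter n T c))). apply iter_TK. eauto. }
  split; [exact TE|]. split.
  - intros m Hm U V HUo [u Hu] HVo [v Hv].
    destruct (TE U HUo (ex_intro _ u Hu)) as [N [HN HNs]].
    pose proof (exact_surj d T u TE) as surj.
    destruct (hit_mono T U N surj (fun z => HNs z I) (N*m) ltac:(nia) v) as [y [Hy Hyv]].
    exists N. split; [exact HN|]. exists y. split; [exact Hy|]. rewrite iter_mul, Hyv. exact Hv.
  - intros U [_ HU] [u Hu]. destruct (HU u Hu) as [eps [He HUe]].
    destruct (Hper (UK d u eps) (UK_open d Hd u eps) (UK_ne d Hd u eps He))
      as [C [[[HCne HCc] [s [Hs HC]]] [n [Hn HE]]]].
    exists C. split; [exact HCne|]. split; [exact HCc|]. split.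
    + intros z Hz. apply HUe; [exact I|]. unfold ballX. specialize (HC z Hz). lra.
    + exists n. split; [exact Hn|]. intros z Hz. apply (proj1 (HE _)). apply iter_TK. eauto.
Qed.

Lemma common_N {X} (d : X -> X -> R) (Hd : is_metric d) T r (l : list X) : 0 < r ->
  (forall z, exists y, T y = z) ->
  topologically_exact X allX (ballX d) eq T ->
  exists N, (1 <= N)%nat /\ forall a, In a l -> forall z, exists y, d a y < r /\ Nat.iter N T y = z.
Proof.
  intros Hr surj TE. induction l as [|b l IH].
  - exists 1%nat. split; auto. intros a [].
  - destruct IH as [N [HN H]].
    destruct (TE (fun x => d b x < r) (ball_open d Hd b r)) as [n [Hn Hb]].
    { exists b. rewrite (d_refl d Hd). exact Hr. }
    exists (max N n). split; [lia|]. intros a [<-|Ha] z.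
    + apply (hit_mono T _ n surj (fun z => Hb z I)). lia.
    + apply (hit_mono T _ N surj (H a Ha)). lia.
Qed.

Lemma img_mult {X} (T : X -> X) k W : (forall x, img T k W x <-> W x) ->
  forall m x, img T (m*k) W x <-> W x.
Proof.
  intros H m. induction m; intros x; simpl.
  - split; [intros [y [Hy ->]]; exact Hy|intros Hx; exists x; auto].
  - split.
    + intros [y [Hy ->]]. rewrite Nat.iter_add. apply H. exists (Nat.iter (m*k) T y). split; auto.
      apply IHm. exists y; auto.
    + intros Hx. apply H in Hx. destruct Hx as [y [Hy ->]]. apply IHm in Hy.
      destruct Hy as [z [Hz ->]]. exists z. split; auto. rewrite Nat.iter_add. reflexivity.
Qed.

Lemma periodic_list {X} (d : X -> X -> R) (Hd : is_metric d) (Hc : compact_metric d) T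
  (HT : continuous_map d T) r (l : list X) : 0 < r ->
  dense_small_periodic_sets X allX (ballX d) T ->
  exists W k, (1 <= k)%nat /\ closed_set d W /\
    (forall w, W w -> exists a, In a l /\ d a w < r) /\
    (forall a, In a l -> exists w, W w /\ d a w < r) /\
    (forall x, img T k W x <-> W x).
Proof.
  intros Hr DS. induction l as [|b l IH].
  - exists (fun _ => False), 1%nat. split; [lia|]. split; [apply closed_empty|].
    split; [tauto|]. split; [intros a []|]. intros x. split; [intros [y [[] _]]|tauto].
  - destruct IH as [W [k [Hk [HWc [HW1 [HW2 HWi]]]]]].
    destruct (DS (fun x => d b x < r) (ball_open d Hd b r)) as [Z [Zne [Zc [ZU [kb [Hkb Zinv]]]]]].
    { exists b. rewrite (d_refl d Hd). exact Hr. }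
    destruct (periodic_core d Hd Hc T HT Z kb Zc Zne Zinv) as [Wb [Wbne [Wbc [WbZ Wbi]]]].
    exists (fun x => W x \/ Wb x), (k * kb)%nat. split; [nia|]. split; [apply closed_union; auto|].
    split; [|split].
    + intros w [h|h].
      * destruct (HW1 w h) as [a [Ha Haw]]. exists a. simpl; auto.
      * exists b. split; [simpl; auto|]. apply ZU. apply WbZ. exact h.
    + intros a [<-|Ha].
      * destruct Wbne as [w Hw]. exists w. split; [right; exact Hw|]. apply ZU. apply WbZ. exact Hw.
      * destruct (HW2 a Ha) as [w [Hw Hw']]. exists w. auto.
    + intros x. pose proof (img_mult T k W HWi kb x) as E1.
      pose proof (img_mult T kb Wb Wbi k x) as E2.
      rewrite (Nat.mul_comm kb k) in E1. split.
      * intros [y [[h|h] ->]]; [left; apply E1|right; apply E2]; exists y; auto.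
      * intros [h|h]; [apply E1 in h|apply E2 in h]; destruct h as [y [Hy ->]]; exists y; auto.
Qed.

Lemma backward {X} (d : X -> X -> R) (T : X -> X) (Hd : is_metric d) (Hc : compact_metric d)
  (HT : continuous_map d T) :
  topologically_exact X allX (ballX d) eq T -> HY_system X allX (ballX d) T ->
  exactly_Devaney_chaotic (X -> Prop) (in_KX d) (ballK d) set_eq (T_K T).
Proof.
  intros TE [_ DS]. split.
  - intros U HUo [A0 HA0]. destruct ((proj1 HUo) A0 HA0) as [[a0 Ha0] _].
    destruct ((proj2 HUo) A0 HA0) as [eps [He HUe]].
    destruct (finite_net d Hd Hc A0 (eps/3)) as [l [Hl1 Hl2]]; [lra|].
    destruct (Hl2 a0 Ha0) as [a1 [Ha1 _]].
    pose proof (exact_surj d T a0 TE) as surj.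
    destruct (common_N d Hd T (eps/3) l ltac:(lra) surj TE) as [N [HN1 HN]].
    exists N. split; [exact HN1|]. intros C [[c0 Hc0] HCc].
    exists (fun x => (exists a, In a l /\ d a x <= eps/3) /\ C (Nat.iter N T x)). split.
    + apply HUe.
      * split.
        -- destruct (HN a1 Ha1 c0) as [y [Hy1 Hy2]]. exists y. split.
           ++ exists a1. split; [exact Ha1|lra].
           ++ rewrite Hy2; exact Hc0.
        -- apply closed_inter.
           ++ apply (closed_list d (fun a x => d a x <= eps/3)). intros; apply closed_cball; auto.
           ++ apply closed_preimage; [apply cont_iter; auto|exact HCc].
      * exists (2*eps/3). split; [lra|]. split.
        -- intros a Ha. destruct (Hl2 a Ha) as [b [Hb Hab]]. destruct (HN b Hb c0) as [y [Hy1 Hy2]].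
           exists y. split.
           ++ split; [exists b; split; [exact Hb|lra]|rewrite Hy2; exact Hc0].
           ++ pose proof (d_tri d Hd a b y). lra.
        -- intros x [[a [Ha Hax]] _]. exists a. split; [apply Hl1; exact Ha|lra].
    + intros x. rewrite iter_TK. split.
      * intros [y [[_ Hy] ->]]. exact Hy.
      * intros Hx. destruct (HN a1 Ha1 x) as [y [Hy1 Hy2]]. exists y. split; [|auto].
        split; [exists a1; split; [exact Ha1|lra]|rewrite Hy2; exact Hx].
  - intros U HUo [A0 HA0]. destruct ((proj1 HUo) A0 HA0) as [[a0 Ha0] _].
    destruct ((proj2 HUo) A0 HA0) as [eps [He HUe]].
    destruct (finite_net d Hd Hc A0 (eps/3)) as [l [Hl1 Hl2]]; [lra|].
    destruct (Hl2 a0 Ha0) as [a1 [Ha1 _]].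
    destruct (periodic_list d Hd Hc T HT (eps/3) l ltac:(lra) DS)
      as [W [k [Hk [HWc [HW1 [HW2 HWi]]]]]].
    exists W. split.
    + apply HUe.
      * split; [|exact HWc]. destruct (HW2 a1 Ha1) as [w [Hw _]]. exists w; exact Hw.
      * exists (2*eps/3). split; [lra|]. split.
        -- intros a Ha. destruct (Hl2 a Ha) as [b [Hb Hab]]. destruct (HW2 b Hb) as [w [Hw Hbw]].
           exists w. split; [exact Hw|]. pose proof (d_tri d Hd a b w). lra.
        -- intros w Hw. destruct (HW1 w Hw) as [a [Ha Haw]]. exists a. split; [apply Hl1; exact Ha|lra].
    + exists k. split; [exact Hk|]. intros x. rewrite iter_TK. apply HWi.
Qed.

Theorem mainTheorem2 (X : Type) (d : X -> X -> R) (T : X -> X)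
  (Hd : is_metric d) (Hcomp : compact_metric d) (Hinf : infinite_type X)
  (HT : continuous_map d T) :
  exactly_Devaney_chaotic (X -> Prop) (in_KX d) (ballK d) set_eq (T_K T)
  <->
  (topologically_exact X allX (ballX d) eq T /\
   HY_system X allX (ballX d) T).
Proof.
  destruct (Hinf nil) as [x0 _]. split.
  - apply (forward d T Hd x0).
  - intros [TE HY]. apply (backward d T Hd Hcomp HT TE HY).
Qed.
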